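(* Let $R$ be a commutative ring and $S$ a multiplicative subset of $R$. Then $R$ is $S$-Noetherian if and only if every $S$-finite $R$-module is $u$-$S$-finitely presented.
   Context: A multiplicative subset $S$ contains $1$ and is closed under products. An $R$-module $M$ is $S$-finite if there are $s\in S$ and a finitely generated submodule $F\subseteq M$ with $sM\subseteq F$. $R$ is $S$-Noetherian if every ideal of $R$ is $S$-finite. An $R$-module $M$ is $u$-$S$-finitely presented if there are $s\in S$ and an exact sequence $0\to T_1\to F\to M\to T_2\to 0$ with $F$ finitely presented and $sT_1=sT_2=0$. *)

(* Defs.v *)
From HB Require Import structures.
From mathcomp Require Import all_boot all_order all_algebra.
Set Implicit Arguments. Unset Strict Implicit. Unset Printing Implicit Defensive.
Import GRing.Theory.
Local Open Scope ring_scope.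

Definition multiplicative (R : comPzRingType) (S : {pred R}) : Prop :=
  1 \in S /\ {in S &, forall a b, a * b \in S}.

Definition is_ideal (R : comPzRingType) (I : {pred R}) : Prop :=
  0 \in I /\ {in I &, forall a b, a + b \in I} /\
  (forall r : R, {in I, forall a, r * a \in I}).

Definition S_finite_ideal (R : comPzRingType) (S : {pred R}) (I : {pred R}) : Prop :=
  exists2 s, s \in S &
    exists l : seq R, all (fun x => x \in I) l /\
      forall x, x \in I ->
        exists c : 'I_(size l) -> R, s * x = \sum_(i < size l) c i * l`_i.

Definition S_Noetherian (R : comPzRingType) (S : {pred R}) : Prop :=
  forall I : {pred R}, is_ideal I -> S_finite_ideal S I.

Definition S_finite_module (R : comPzRingType) (S : {pred R}) (M : lmodType R) : Prop :=
  exists2 s, s \in S &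
    exists l : seq M, forall m : M,
      exists c : 'I_(size l) -> R, s *: m = \sum_(i < size l) c i *: l`_i.

Definition exact_at (R : comPzRingType) (U V W : lmodType R)
  (f : U -> V) (g : V -> W) : Prop :=
  forall v : V, g v = 0 <-> exists u : U, f u = v.

Definition surj (A B : Type) (f : A -> B) : Prop := forall b, exists a, f a = b.

Definition finitely_presented (R : comPzRingType) (M : lmodType R) : Prop :=
  exists (n m : nat) (a : {linear 'rV[R]_m -> 'rV[R]_n}) (p : {linear 'rV[R]_n -> M}),
    exact_at a p /\ surj p.

Definition u_S_finitely_presented (R : comPzRingType) (S : {pred R}) (M : lmodType R) : Prop :=
  exists2 s, s \in S &
    exists (T1 F T2 : lmodType R) (g : {linear T1 -> F}) (f : {linear F -> M})
           (h : {linear M -> T2}),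
      finitely_presented F /\ injective g /\ exact_at g f /\ exact_at f h /\
      surj h /\ (forall t : T1, s *: t = 0) /\ (forall t : T2, s *: t = 0).

(* Main.v *)
Require Import Defs.
From mathcomp Require Import all_boot all_order all_algebra.
From HB Require Import structures.
From mathcomp Require boolp.

Module Helpers.
Import boolp.
Set Implicit Arguments. Unset Strict Implicit. Unset Printing Implicit Defensive.
Import GRing.Theory.
Local Open Scope ring_scope.

Definition submod (R : pzRingType) (V : lmodType R) (P : V -> Prop) :=
  [/\ P 0, (forall x y, P x -> P y -> P (x + y)) & (forall a x, P x -> P (a *: x))].

Section Quot.
Variables (R : pzRingType) (V : lmodType R) (P : V -> Prop).
Hypothesis HP : submod P.

Lemma P0 : P 0. Proof. by case: HP. Qed.
Lemma PD x y : P x -> P y -> P (x + y). Proof. by case: HP => _ h _; apply: h. Qed.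
Lemma PZ a x : P x -> P (a *: x). Proof. by case: HP => _ _ h; apply: h. Qed.
Lemma PN x : P x -> P (- x). Proof. by move=> h; rewrite -scaleN1r; apply: PZ. Qed.
Lemma PB x y : P x -> P y -> P (x - y). Proof. by move=> hx hy; apply: PD => //; apply: PN. Qed.

Definition cls (x : V) : pred V := fun y => `[< P (x - y) >].
Lemma exP x : exists y, cls x y.
Proof. by exists x; apply/asboolP; rewrite subrr; apply: P0. Qed.
Definition rep x := xchoose (exP x).
Lemma rep_spec x : P (x - rep x).
Proof. by have /asboolP := xchooseP (exP x). Qed.
Lemma rep_eq x y : P (x - y) -> rep x = rep y.
Proof.
move=> h; apply: eq_xchoose => z; rewrite /cls.
apply/asboolP/asboolP => hz.
  have -> : y - z = (x - z) - (x - y) by rewrite [RHS]addrC opprB addrA subrK.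
  exact: PB.
have -> : x - z = (x - y) + (y - z) by rewrite [RHS]addrA subrK.
exact: PD.
Qed.
Lemma rep_id x : rep (rep x) = rep x.
Proof. by apply: rep_eq; rewrite -opprB; apply/PN/rep_spec. Qed.

Definition quot := {x : V | rep x == x}.
HB.instance Definition _ := Choice.on quot.
Definition pi (x : V) : quot := exist _ (rep x) (introT eqP (rep_id x)).
Lemma pi_val (q : quot) : pi (val q) = q.
Proof. by case: q => x hx; apply: val_inj => /=; apply/eqP. Qed.
Lemma pi_eq x y : pi x = pi y <-> P (x - y).
Proof.
split=> [h|h]; last by apply: val_inj => /=; apply: rep_eq.
have e : rep x = rep y by move/(congr1 val): h.
have -> : x - y = (x - rep x) - (y - rep y) by rewrite e opprB addrA subrK.
by apply: PB; apply: rep_spec.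
Qed.
Lemma val_pi x : P (val (pi x) - x).
Proof. by rewrite /= -opprB; apply/PN/rep_spec. Qed.

Definition qzero := pi 0.
Definition qadd (a b : quot) := pi (val a + val b).
Definition qopp (a : quot) := pi (- val a).
Definition qscale r (a : quot) := pi (r *: val a).

Lemma qaddE x y : qadd (pi x) (pi y) = pi (x + y).
Proof.
apply/pi_eq; have -> : val (pi x) + val (pi y) - (x + y) = (val (pi x) - x) + (val (pi y) - y).
  by rewrite opprD addrACA.
by apply: PD; apply: val_pi.
Qed.
Lemma qoppE x : qopp (pi x) = pi (- x).
Proof. by apply/pi_eq; rewrite -opprD; apply/PN/val_pi. Qed.
Lemma qscaleE r x : qscale r (pi x) = pi (r *: x).
Proof. by apply/pi_eq; rewrite -scalerBr; apply/PZ/val_pi. Qed.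

Lemma qind (Q : quot -> Prop) : (forall x, Q (pi x)) -> forall q, Q q.
Proof. by move=> h q; rewrite -(pi_val q). Qed.

Lemma qaddA : associative qadd.
Proof. by elim/qind => x; elim/qind => y; elim/qind => z; rewrite !qaddE addrA. Qed.
Lemma qaddC : commutative qadd.
Proof. by elim/qind => x; elim/qind => y; rewrite !qaddE addrC. Qed.
Lemma qadd0 : left_id qzero qadd.
Proof. by elim/qind => x; rewrite /qzero qaddE add0r. Qed.
Lemma qaddN : left_inverse qzero qopp qadd.
Proof. by elim/qind => x; rewrite qoppE qaddE addNr. Qed.
HB.instance Definition _ := GRing.isZmodule.Build quot qaddA qaddC qadd0 qaddN.
Lemma piD x y : pi x + pi y = pi (x + y). Proof. exact: qaddE. Qed.
Lemma qscaleA a b v : qscale a (qscale b v) = qscale (a * b) v.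
Proof. by elim/qind: v => x; rewrite !qscaleE scalerA. Qed.
Lemma qscale1 : left_id 1 qscale.
Proof. by elim/qind => x; rewrite qscaleE scale1r. Qed.
Lemma qscaleDr : right_distributive qscale +%R.
Proof. by move=> a; elim/qind => x; elim/qind => y; rewrite piD !qscaleE piD scalerDr. Qed.
Lemma qscaleDl v : {morph qscale^~ v: a b / a + b}.
Proof. by elim/qind: v => x a b; rewrite !qscaleE piD scalerDl. Qed.
HB.instance Definition _ := GRing.Zmodule_isLmodule.Build R quot qscaleA qscale1 qscaleDr qscaleDl.

Lemma piZ a x : a *: pi x = pi (a *: x). Proof. exact: qscaleE. Qed.
Lemma pi_is_linear : linear pi.
Proof. by move=> a x y; rewrite piZ piD. Qed.
HB.instance Definition _ := GRing.isLinear.Build R V quot _ pi pi_is_linear.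

Lemma pi0 x : pi x = 0 <-> P x.
Proof. by rewrite -[0]/(pi 0) pi_eq subr0. Qed.
End Quot.


Section Sub.
Variables (R : pzRingType) (V : lmodType R) (P : V -> Prop).
Hypothesis HP : submod P.
Definition subm (_ : submod P) := {x : V | `[< P x >]}.
HB.instance Definition _ := Choice.on (subm HP).
Definition smk x (h : P x) : subm HP := exist _ x (introT (asboolP _) h).
Lemma sval_P (u : subm HP) : P (val u). Proof. by case: u => x /= /asboolP. Qed.
Definition szero := smk (P0 HP).
Definition sadd (a b : subm HP) := smk (PD HP (sval_P a) (sval_P b)).
Definition sopp (a : subm HP) := smk (PN HP (sval_P a)).
Definition sscale r (a : subm HP) := smk (PZ HP r (sval_P a)).
Lemma saddA : associative sadd.
Proof. by move=> a b c; apply: val_inj; rewrite /= addrA. Qed.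
Lemma saddC : commutative sadd.
Proof. by move=> a b; apply: val_inj; rewrite /= addrC. Qed.
Lemma sadd0 : left_id szero sadd.
Proof. by move=> a; apply: val_inj; rewrite /= add0r. Qed.
Lemma saddN : left_inverse szero sopp sadd.
Proof. by move=> a; apply: val_inj; rewrite /= addNr. Qed.
HB.instance Definition _ := GRing.isZmodule.Build (subm HP) saddA saddC sadd0 saddN.
Lemma sscaleA a b v : sscale a (sscale b v) = sscale (a * b) v.
Proof. by apply: val_inj; rewrite /= scalerA. Qed.
Lemma sscale1 : left_id 1 sscale.
Proof. by move=> a; apply: val_inj; rewrite /= scale1r. Qed.
Lemma sscaleDr : right_distributive sscale +%R.
Proof. by move=> a u v; apply: val_inj; rewrite /= scalerDr. Qed.
Lemma sscaleDl v : {morph sscale^~ v: a b / a + b}.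
Proof. by move=> a b; apply: val_inj; rewrite /= scalerDl. Qed.
HB.instance Definition _ := GRing.Zmodule_isLmodule.Build R (subm HP) sscaleA sscale1 sscaleDr sscaleDl.
Definition sval' (u : subm HP) : V := val u.
Lemma sval_is_linear : linear sval'.
Proof. by []. Qed.
HB.instance Definition _ := GRing.isLinear.Build R (subm HP) V _ sval' sval_is_linear.
Lemma sval_inj : injective sval'.
Proof. exact: val_inj. Qed.
End Sub.


Section Span.
Variables (R : pzRingType) (V : lmodType R).
Fixpoint sp (l : seq V) (v : V) : Prop :=
  if l is x :: l' then exists a, sp l' (v - a *: x) else v = 0.

Lemma spE l v : sp l v <-> exists c : 'I_(size l) -> R, v = \sum_(i < size l) c i *: l`_i.
Proof.
elim: l v => [|x l IH] v /=.
  by split=> [->|[c ->]]; [exists (fun _ => 0); rewrite big_ord0 | rewrite big_ord0].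
split=> [[a /IH [c hc]]|[c hc]].
  exists (fun i : 'I_(size l).+1 => if unlift ord0 i is Some j then c j else a).
  rewrite big_ord_recl /= unlift_none.
  under eq_bigr => i _ do rewrite liftK /=.
  by rewrite -hc addrC subrK.
exists (c ord0); apply/IH; exists (fun i => c (lift ord0 i)).
rewrite hc big_ord_recl /= [c ord0 *: x + _]addrC addrK.
by apply: eq_bigr => i _; rewrite add0n.
Qed.

Lemma sp0 l : sp l 0.
Proof. by elim: l => [|x l IH] //=; exists 0; rewrite scale0r subr0. Qed.
Lemma spD l u v : sp l u -> sp l v -> sp l (u + v).
Proof.
elim: l u v => [|x l IH] u v /=; first by move=> -> ->; rewrite addr0.
move=> [a ha] [b hb]; exists (a + b).
by have := IH _ _ ha hb; rewrite scalerDl opprD addrACA.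
Qed.
Lemma spZ l a v : sp l v -> sp l (a *: v).
Proof.
elim: l v => [|x l IH] v /=; first by move=> ->; rewrite scaler0.
by move=> [b hb]; exists (a * b); have := IH _ hb; rewrite scalerBr scalerA.
Qed.
Lemma spN l v : sp l v -> sp l (- v).
Proof. by move=> h; rewrite -scaleN1r; apply: spZ. Qed.
Lemma spB l u v : sp l u -> sp l v -> sp l (u - v).
Proof. by move=> hu hv; apply: spD => //; apply: spN. Qed.
Lemma sp_catl l1 l2 v : sp l1 v -> sp (l1 ++ l2) v.
Proof.
elim: l1 v => [|x l IH] v /=; first by move=> ->; apply: sp0.
by move=> [a ha]; exists a; apply: IH.
Qed.
Lemma sp_catr l1 l2 v : sp l2 v -> sp (l1 ++ l2) v.
Proof.
elim: l1 v => [|x l IH] v //= h; exists 0; rewrite scale0r subr0; exact: IH.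
Qed.
Lemma sp_mem l x : x \in l -> sp l x.
Proof.
elim: l => [|y l IH] //; rewrite inE => /orP [/eqP ->|/IH h] /=.
  by exists 1; rewrite scale1r subrr; apply: sp0.
by exists 0; rewrite scale0r subr0.
Qed.
Lemma sp_sum l (I : finType) (F : I -> V) : (forall i, sp l (F i)) -> sp l (\sum_i F i).
Proof. by move=> h; apply: (big_ind (sp l)) => //; [apply: sp0 | apply: spD]. Qed.
End Span.

Section SpanLin.
Variables (R : pzRingType) (U V : lmodType R) (f : U -> V).
Hypothesis fD : forall x y, f (x + y) = f x + f y.
Hypothesis fZ : forall a x, f (a *: x) = a *: f x.
Lemma f0 : f 0 = 0. Proof. by rewrite -(scale0r 0) fZ scale0r. Qed.
Lemma fB x y : f (x - y) = f x - f y.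
Proof. by rewrite fD -scaleN1r fZ scaleN1r. Qed.
Lemma sp_lin l v : sp l v -> sp (map f l) (f v).
Proof.
elim: l v => [|x l IH] v /=; first by move=> ->; apply: f0.
by move=> [a ha]; exists a; rewrite -fZ -fB; apply: IH.
Qed.
Lemma sp_map_inv l u : sp (map f l) u -> exists2 w, sp l w & f w = u.
Proof.
elim: l u => [|x l IH] u /=; first by move=> ->; exists 0 => //; rewrite f0.
move=> [a /IH [w hw e]]; exists (w + a *: x); first by exists a; rewrite addrK.
by rewrite fD e fZ subrK.
Qed.
Lemma lin_sum (I : finType) (c : I -> R) (F : I -> U) :
  f (\sum_i c i *: F i) = \sum_i c i *: f (F i).
Proof.
rewrite (big_morph f fD f0); apply: eq_bigr => i _; exact: fZ.
Qed.
End SpanLin.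


Lemma sp_sub (R : pzRingType) (V : lmodType R) (P : V -> Prop) l v :
  submod P -> (forall y, y \in l -> P y) -> sp l v -> P v.
Proof.
move=> HP; elim: l v => [|x l IH] v hl /=; first by move=> ->; apply: P0.
move=> [a ha]; have -> : v = (v - a *: x) + a *: x by rewrite subrK.
apply: PD => //; first by apply: IH => // y hy; apply: hl; rewrite inE hy orbT.
by apply: PZ => //; apply: hl; rewrite inE eqxx.
Qed.

Section Noeth.
Variables (R : comPzRingType) (S : {pred R}).
Hypothesis hS : Defs.multiplicative S.
Hypothesis hN : S_Noetherian S.

Lemma ideal_sp (l : seq R) (v : R) :
  (exists c : 'I_(size l) -> R, v = \sum_(i < size l) c i * l`_i) ->
  sp (l : seq R^o) (v : R^o).
Proof. by move=> h; apply/spE. Qed.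

Lemma noeth_rV n (N : 'rV[R]_n -> Prop) : submod N ->
  exists2 s, s \in S & exists l, (forall y, y \in l -> N y) /\
     forall x, N x -> sp l (s *: x).
Proof.
elim: n N => [|n IH] N HN.
  exists 1; first by case: hS.
  exists [::]; split=> // x _ /=.
  by apply/rowP => -[i hi].
pose hd (x : 'rV[R]_n.+1) : R^o := x 0 ord0.
have hdD x y : hd (x + y) = hd x + hd y by rewrite /hd mxE.
have hdZ a x : hd (a *: x) = a *: hd x by rewrite /hd mxE.
pose J : {pred R} := fun r => `[< exists2 x, N x & hd x = r >].
have HJ : is_ideal J.
  split; first by apply/asboolP; exists 0; [apply: P0 | rewrite /hd mxE].
  split.
    move=> a b /asboolP [x hx <-] /asboolP [y hy <-]; apply/asboolP.
    by exists (x + y); [apply: PD | rewrite hdD].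
  move=> r a /asboolP [x hx <-]; apply/asboolP.
  by exists (r *: x); [apply: PZ | rewrite hdZ].
have [s sS [la [hla hsJ]]] := hN HJ.
have [lb [hlb elb]] : exists lb, (forall y, y \in lb -> N y) /\ map hd lb = la.
  elim: la hla {hsJ} => [|a la IHa] /=; first by exists [::].
  move=> /andP [/asboolP [x hx hxa] /IHa [lb [hlb elb]]].
  exists (x :: lb); split; last by rewrite /= hxa elb.
  by move=> y; rewrite inE => /orP [/eqP ->|/hlb].
pose ext (y : 'rV[R]_n) : 'rV[R]_n.+1 := row_mx (0 : 'rV[R]_1) y.
have extD x y : ext (x + y) = ext x + ext y by rewrite /ext (@add_row_mx _ 1 1 n) addr0.
have extZ a x : ext (a *: x) = a *: ext x by rewrite /ext (@scale_row_mx _ 1 1 n) scaler0.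
pose N' y := N (ext y).
have HN' : submod N'.
  split; first by rewrite /N' /ext (@row_mx0 _ 1 1 n); apply: P0.
    by move=> x y hx hy; rewrite /N' extD; apply: PD.
  by move=> a x hx; rewrite /N' extZ; apply: PZ.
have [t tS [lc [hlc htc]]] := IH N' HN'.
exists (t * s); first by case: hS => _ h; exact: (h _ _ tS sS).
exists (lb ++ map ext lc); split.
  move=> y; rewrite mem_cat => /orP [/hlb //|/mapP [z hz ->]]; exact: hlc.
move=> x hx.
have hx0 : J (hd x) by apply/asboolP; exists x.
have := ideal_sp (hsJ _ hx0); rewrite -elb => /(sp_map_inv hdD hdZ) [w hw ew].
pose z := s *: x - w.
have Nz : N z by apply: PB => //; [apply: PZ | apply: (sp_sub HN hlb hw)].
have hz0 : hd z = 0.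
  have ew' : w 0 ord0 = s * x 0 ord0 := ew.
  by rewrite /z /hd !mxE ew' subrr.
have ez : z = ext (rsubmx (z : 'M_(1, 1 + n))).
  have hl : lsubmx (z : 'M_(1, 1 + n)) = 0.
    apply/rowP => j; rewrite ord1 !mxE.
    have e0 : (lshift n (0 : 'I_1) : 'I_(1 + n)) = ord0 by apply: val_inj.
    by rewrite -hz0 /hd e0 /z !mxE.
  by rewrite -{1}(@hsubmxK _ 1 1 n z) hl.
have hNz : N' (rsubmx (z : 'M_(1, 1 + n))) by rewrite /N' -ez.
have := htc _ hNz => /(sp_lin extD extZ).
rewrite extZ -ez => hzt.
have -> : (t * s) *: x = t *: z + t *: w by rewrite -scalerDr /z subrK scalerA.
apply: spD; first exact: sp_catr.
by apply: sp_catl; apply: spZ.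
Qed.
End Noeth.


Section Fwd.
Variables (R : comPzRingType) (S : {pred R}) (M : lmodType R) (l : seq M).
Definition p0 (v : 'rV[R]_(size l)) : M := \sum_(i < size l) v 0 i *: l`_i.
Lemma p0D x y : p0 (x + y) = p0 x + p0 y.
Proof. by rewrite /p0 -big_split; apply: eq_bigr => i _; rewrite mxE scalerDl. Qed.
Lemma p0Z a x : p0 (a *: x) = a *: p0 x.
Proof. by rewrite /p0 scaler_sumr; apply: eq_bigr => i _; rewrite mxE scalerA. Qed.
Lemma HK : submod (fun v => p0 v = 0).
Proof.
split; first by rewrite /p0 big1 // => i _; rewrite mxE scale0r.
  by move=> x y hx hy; rewrite p0D hx hy addr0.
by move=> a x hx; rewrite p0Z hx scaler0.
Qed.
Variable kl : seq 'rV[R]_(size l).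
Hypothesis hkl : forall y, y \in kl -> p0 y = 0.
Lemma HK' : submod (sp kl).
Proof. by split; [apply: sp0 | apply: spD | move=> a x; apply: spZ]. Qed.
Definition FF := quot HK'.
Definition fF (q : FF) : M := p0 (val q).
Lemma fF_pi v : fF (pi HK' v) = p0 v.
Proof.
have := sp_sub HK hkl (val_pi HK' v); rewrite (fB p0D p0Z) => /eqP.
by rewrite subr_eq0 => /eqP.
Qed.
Lemma fF_linear : linear fF.
Proof.
move=> a; elim/qind => x; elim/qind => y.
by rewrite piZ piD !fF_pi p0D p0Z.
Qed.
HB.instance Definition _ := GRing.isLinear.Build R FF M _ fF fF_linear.
Lemma fFD x y : fF (x + y) = fF x + fF y. Proof. exact: raddfD. Qed.
Lemma fFZ a x : fF (a *: x) = a *: fF x. Proof. exact: linearZ. Qed.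
Lemma fF0 : fF 0 = 0. Proof. exact: raddf0. Qed.
Lemma Hkf : submod (fun q : FF => fF q = 0).
Proof.
split; first by rewrite fF0.
  by move=> x y hx hy; rewrite fFD hx hy addr0.
by move=> a x hx; rewrite fFZ hx scaler0.
Qed.
Lemma Him : submod (fun m : M => exists q, fF q = m).
Proof.
split; first by exists 0; rewrite fF0.
  by move=> x y [q <-] [q' <-]; exists (q + q'); rewrite fFD.
by move=> a x [q <-]; exists (a *: q); rewrite fFZ.
Qed.

Definition Amx : 'M[R]_(size kl, size l) := \matrix_(j, i) kl`_j 0 i.

Lemma FF_fp : finitely_presented FF.
Proof.
exists (size l), (size kl), (mulmxr Amx), (pi HK'); split; last first.
  by move=> b; exists (val b); apply: pi_val.
move=> v; rewrite pi0; split.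
  move/spE => [c ->]; exists (\row_j c j); rewrite /= mulmx_sum_row.
  apply: eq_bigr => j _; rewrite mxE; congr (_ *: _).
  by apply/rowP => i; rewrite !mxE.
move=> [u <-]; apply/spE; exists (fun j => u 0 j); rewrite /= mulmx_sum_row.
apply: eq_bigr => j _; congr (_ *: _).
by apply/rowP => i; rewrite !mxE.
Qed.

Lemma fwd_main s t : s * t \in S ->
  (forall m, exists v, p0 v = s *: m) ->
  (forall v, p0 v = 0 -> sp kl (t *: v)) ->
  u_S_finitely_presented S M.
Proof.
move=> hst hs ht; exists (s * t) => //.
exists (subm Hkf), FF, (quot Him), (@sval' _ _ _ Hkf : {linear _ -> _}), (fF : {linear _ -> _}), (pi Him).
split; first exact: FF_fp.
split; first exact: sval_inj.
split.
  move=> q; split; last by move=> [u <-]; apply: (sval_P u).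
  by move=> hq; exists (@smk _ _ _ Hkf _ hq).
split.
  by move=> m; rewrite pi0.
split; first by move=> b; exists (val b); apply: pi_val.
split.
  move=> u; apply: sval_inj; rewrite linearZ raddf0 /=.
  have hq : fF (sval' u) = 0 := sval_P u.
  move: (sval' u) hq; elim/qind => x; rewrite fF_pi => /ht /(pi0 HK') h.
  by rewrite -scalerA [t *: _]piZ h scaler0.
elim/qind => m; rewrite piZ pi0 mulrC -scalerA.
have [v hv] := hs m; exists (t *: pi HK' v).
by rewrite linearZ /= fF_pi hv.
Qed.
End Fwd.


Lemma fwd (R : comPzRingType) (S : {pred R}) : Defs.multiplicative S -> S_Noetherian S ->
  forall M : lmodType R, S_finite_module S M -> u_S_finitely_presented S M.
Proof.
move=> hS hN M [s sS [l hl]].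
have [t tS [kl [hkl htk]]] := noeth_rV hS hN (HK l).
apply: (@fwd_main R S M l kl hkl s t).
- by case: hS => _ h; exact: (h _ _ sS tS).
- move=> m; have [c hc] := hl m; exists (\row_i c i); rewrite hc /p0.
  by apply: eq_bigr => i _; rewrite mxE.
- exact: htk.
Qed.

Lemma bwd (R : comPzRingType) (S : {pred R}) : Defs.multiplicative S ->
  (forall M : lmodType R, S_finite_module S M -> u_S_finitely_presented S M) ->
  S_Noetherian S.
Proof.
move=> hS H I [I0 [ID IM]].
have HPI : submod (fun x : R^o => x \in I).
  split; [exact: I0 | move=> x y hx hy; exact: ID hx hy | move=> a x hx; exact: IM a x hx].
pose M := quot HPI.
pose one : M := pi HPI (1 : R^o).
have piR (x : R^o) : pi HPI x = x *: one by rewrite /one piZ; congr pi; rewrite /GRing.scale /= mulr1.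
have fin : S_finite_module S M.
  exists 1; first by case: hS.
  exists [:: one] => q; exists (fun _ => val q).
  by rewrite big_ord1 /= scale1r -piR pi_val.
have [s sS [T1 [F [T2 [g [f [h [[n [m [a [p [exap surjp]]]]] [ginj [exgf [exfh [surjh [sT1 sT2]]]]]]]]]]]]] := H M fin.
have : h (s *: one) = 0 by rewrite linearZ_LR sT2.
move/exfh => [y0 hy]; have [e he] := surjp y0.
pose q (v : 'rV[R]_n) : M := f (p v).
have qD u v : q (u + v) = q u + q v by rewrite /q !raddfD.
have qZ c v : q (c *: v) = c *: q v by rewrite /q !linearZ_LR.
pose r (i : 'I_n) : R^o := val (q (delta_mx 0 i)).
pose psi (v : 'rV[R]_n) : R^o := \sum_i v 0 i *: r i.
have psiD u v : psi (u + v) = psi u + psi v.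
  by rewrite /psi -big_split; apply: eq_bigr => i _; rewrite mxE scalerDl.
have psiZ c v : psi (c *: v) = c *: psi v.
  by rewrite /psi scaler_sumr; apply: eq_bigr => i _; rewrite mxE scalerA.
have piD' x1 x2 : pi HPI (x1 + x2) = pi HPI x1 + pi HPI x2 by rewrite piD.
have piZ' c x : pi HPI (c *: x) = c *: pi HPI x by rewrite piZ.
have pi_psi v : pi HPI (psi v) = q v.
  rewrite /psi (lin_sum piD' piZ') {2}(row_sum_delta v) (lin_sum qD qZ).
  by apply: eq_bigr => i _; rewrite /r pi_val.
have e_q : q e = s *: one by rewrite /q he hy.
have i0I : psi e - s \in I.
  by apply/(pi_eq HPI); rewrite pi_psi e_q piR.
have genI (j : 'I_m) : psi (a (delta_mx 0 j)) \in I.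
  apply/(pi0 HPI); rewrite pi_psi /q.
  have -> : p (a (delta_mx 0 j)) = 0 by apply/exap; exists (delta_mx 0 j).
  by rewrite raddf0.
pose L : seq R := (psi e - s) :: [seq psi (a (delta_mx 0 j)) | j <- enum 'I_m].
exists (s * s); first by case: hS => _ hm; exact: (hm _ _ sS sS).
exists L; split.
  rewrite /= i0I /=; apply/allP => z /mapP [j _ ->]; exact: genI.
move=> x xI.
have hq0 : q (x *: e) = 0.
  rewrite qZ e_q scalerA -piR; apply/(pi0 HPI).
  by rewrite mulrC; exact: IM s x xI.
have [t1 ht1] : exists t1, g t1 = p (x *: e) by apply/exgf.
have hp0 : p ((s * x) *: e) = 0.
  by rewrite -scalerA linearZ_LR -ht1 -linearZ_LR sT1 raddf0.
have [w hw] : exists w, a w = (s * x) *: e by apply/exap.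
have aw : a w = \sum_j w 0 j *: a (delta_mx 0 j).
  by rewrite {1}(row_sum_delta w) (lin_sum (raddfD a) (linearZ_LR a)).
have key : psi (a w) = (s * x) * psi e by rewrite hw psiZ.
have pa : psi (a w) = \sum_j w 0 j *: psi (a (delta_mx 0 j)).
  by rewrite aw (lin_sum psiD psiZ).
have hsp : sp (L : seq R^o) (s * s * x).
  have -> : (s * s * x : R^o) = psi (a w) - (s * x) *: (psi e - s).
    rewrite key; change (s * s * x = s * x * psi e - s * x * (psi e - s)).
    by rewrite mulrBr opprB addrC subrK mulrAC.
  apply: spB; last by apply: spZ; apply: sp_mem; rewrite inE eqxx.
  apply: (@sp_catr _ _ [:: psi e - s]); rewrite pa; apply: sp_sum => j.
  apply: spZ; apply: sp_mem; apply/mapP; by exists j => //; rewrite mem_enum inE.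
exact: (proj1 (spE _ _) hsp).
Qed.

End Helpers.

Unset Implicit Arguments. Set Strict Implicit. Set Printing Implicit Defensive.

Theorem proposition2p3 (R : comPzRingType) (S : {pred R}) :
  multiplicative S ->
  (S_Noetherian S <->
   forall M : lmodType R, S_finite_module S M -> u_S_finitely_presented S M).
Proof.
move=> hS; split; [exact: (Helpers.fwd hS) | exact: (Helpers.bwd hS)].
Qed.
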